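(* Suppose $G$ is connected and $\Gamma_G$ is population monotonic. Then (a) any two triangles (subgraphs isomorphic to $K_3$) of $G$ that share at least one vertex share a common edge, and this common edge is the strictly maximum-weight edge of each of the two triangles; and (b) any two triangles of $G$ share at least one vertex, and in fact there is a single edge $uv$ of $G$ contained in every triangle of $G$ which is the maximum-weight edge of every triangle of $G$.
   Context: $G=(V,E;w)$ is a finite simple graph with edge weights $w:E\to\mathbb{R}$, $w_e>0$ for all $e\in E$. The matching game on $G$ is the cooperative game $\Gamma_G=(N,\gamma)$ with player set $N=V$ and, for $S\subseteq N$, $\gamma(S)$ equal to the maximum weight of a matching in the induced subgraph $G[S]$ (so $\gamma(\emptyset)=0$). A population monotonic allocation scheme (PMAS) is a family $(\boldsymbol{x}_S)_{\emptyset\neq S\subseteq N}$ with $\boldsymbol{x}_S=(x_{S,i})_{i\in S}\in\mathbb{R}^S$ such that (efficiency) $\sum_{i\in S}x_{S,i}=\gamma(S)$ for every nonempty $S\subseteq N$, and (monotonicity) $x_{S,i}\le x_{T,i}$ whenever $\emptyset\ne S\subseteq T\subseteq N$ and $i\in S$. $\Gamma_G$ is called population monotonic if it admits a PMAS. *)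

(* Defs.v *)
From HB Require Import structures.
From mathcomp Require Import all_boot all_order all_algebra.
Set Implicit Arguments. Unset Strict Implicit. Unset Printing Implicit Defensive.
Import Order.TTheory GRing.Theory Num.Theory.
Local Open Scope ring_scope.

(* A finite simple graph: vertex type V (finType), edge relation e that is
   symmetric and irreflexive; edge weights w : V -> V -> R, symmetric and
   positive on edges (values on non-edges are irrelevant). *)
Definition simple_graph (V : finType) (e : rel V) : Prop :=
  symmetric e /\ irreflexive e.

Definition edge_weights (R : realFieldType) (V : finType) (e : rel V)
  (w : V -> V -> R) : Prop :=
  (forall x y, w x y = w y x) /\ (forall x y, e x y -> 0 < w x y).

Definition connected_graph (V : finType) (e : rel V) : Prop :=
  forall u v, connect e u v.

(* A matching of the induced subgraph G[S], given as a set of ordered pairs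
   (each edge listed once); distinct pairs have disjoint endpoints. *)
Definition is_matching (V : finType) (e : rel V) (S : {set V})
  (M : {set V * V}) : bool :=
  [forall p in M, [&& e p.1 p.2, p.1 \in S & p.2 \in S]] &&
  [forall p in M, forall q in M, (p != q) ==>
     [&& p.1 != q.1, p.1 != q.2, p.2 != q.1 & p.2 != q.2]].

Definition matching_weight (R : realFieldType) (V : finType)
  (w : V -> V -> R) (M : {set V * V}) : R :=
  \sum_(p in M) w p.1 p.2.

Definition gamma (R : realFieldType) (V : finType) (e : rel V)
  (w : V -> V -> R) (S : {set V}) : R :=
  \big[Num.max/0]_(M : {set V * V} | is_matching e S M) matching_weight w M.

(* Population monotonic allocation scheme; x S i is x_{S,i}
   (values for i \notin S are irrelevant). *)
Definition is_PMAS (R : realFieldType) (V : finType) (e : rel V)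
  (w : V -> V -> R) (x : {set V} -> V -> R) : Prop :=
  (forall S : {set V}, S != set0 -> \sum_(i in S) x S i = gamma e w S) /\
  (forall (S T : {set V}) (i : V), S \subset T -> i \in S -> x S i <= x T i).

Definition population_monotonic (R : realFieldType) (V : finType) (e : rel V)
  (w : V -> V -> R) : Prop :=
  exists x : {set V} -> V -> R, is_PMAS e w x.

Definition is_triangle (V : finType) (e : rel V) (T : {set V}) : Prop :=
  #|T| = 3%N /\ (forall x y, x \in T -> y \in T -> x != y -> e x y).

Definition strict_max_edge (R : realFieldType) (V : finType)
  (w : V -> V -> R) (T : {set V}) (u v : V) : Prop :=
  [/\ u \in T, v \in T, u != v &
   forall x y, x \in T -> y \in T -> x != y ->
     [set x; y] != [set u; v] -> w x y < w u v].

(* Main.v *)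
Require Import Defs.
From HB Require Import structures.
From mathcomp Require Import all_boot all_order all_algebra.
From mathcomp Require Import lra.
Set Implicit Arguments. Unset Strict Implicit. Unset Printing Implicit Defensive.
Import Order.TTheory GRing.Theory Num.Theory.
Local Open Scope ring_scope.

Lemma pig4 (V : finType) (b c f y1 y2 y3 y4 : V) :
  y1 \in [set b; c; f] -> y2 \in [set b; c; f] -> y3 \in [set b; c; f] ->
  y4 \in [set b; c; f] ->
  [&& y1 != y2, y1 != y3, y1 != y4, y2 != y3, y2 != y4 & y3 != y4] = false.
Proof.
rewrite !inE;
do 4! (case/orP=> [/orP[]|] /eqP->);
by rewrite ?eqxx ?andbF.
Qed.

Lemma sum2 (R : realFieldType) (V : finType) (a b : V) (F : V -> R) :
  a != b -> \sum_(i in [set a; b]) F i = F a + F b.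
Proof. by move=> ab; rewrite big_setU1 ?big_set1 // inE. Qed.

Lemma sum3 (R : realFieldType) (V : finType) (a b c : V) (F : V -> R) :
  a != b -> a != c -> b != c ->
  \sum_(i in [set a; b; c]) F i = F a + F b + F c.
Proof.
move=> ab ac bc; rewrite setUC big_setU1 ?sum2 //.
  by rewrite /= addrC.
by rewrite !inE negb_or !(eq_sym c) ac bc.
Qed.

Section S.
Variables (R : realFieldType) (V : finType) (e : rel V) (w : V -> V -> R).

Lemma gamma_ge0 (S : {set V}) : 0 <= gamma e w S.
Proof.
rewrite /gamma; elim/big_rec: _ => // i y _ y0.
by rewrite le_max y0 orbT.
Qed.

Lemma gamma_ge (S : {set V}) M : is_matching e S M -> matching_weight w M <= gamma e w S.
Proof.
by move=> HM; rewrite /gamma (bigD1 M) //= le_max lexx.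
Qed.

Lemma gamma_le3 (S : {set V}) (b c f : V) (m : R) : irreflexive e ->
  S \subset [set b; c; f] -> 0 <= m ->
  (forall y z, y \in S -> z \in S -> e y z -> w y z <= m) -> gamma e w S <= m.
Proof.
move=> irr sS m0 Hw; rewrite /gamma.
apply: (big_ind (fun y => y <= m)) => //; first by move=> y z ym zm; rewrite ge_max ym.
move=> M /andP[/forallP H1 /forallP H2].
have [->|/set0Pn[p pM]] := eqVneq M set0; first by rewrite /matching_weight big_set0.
have Hp := H1 p; rewrite pM /= in Hp; case/and3P: Hp => ep p1 p2.
have -> : M = [set p].
  apply/setP => q; rewrite inE; apply/idP/eqP => [qM|->//].
  apply/eqP; apply/negP => /negP pq.
  have := H2 p; rewrite pM /= => /forallP /(_ q); rewrite qM /=.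
  rewrite eq_sym pq /= => /and4P[d1 d2 d3 d4].
  have Hq := H1 q; rewrite qM /= in Hq; case/and3P: Hq => eq q1 q2.
  have n1 : p.1 != p.2 by apply/eqP => E; rewrite E irr in ep.
  have n2 : q.1 != q.2 by apply/eqP => E; rewrite E irr in eq.
  have := pig4 (subsetP sS _ p1) (subsetP sS _ p2) (subsetP sS _ q1) (subsetP sS _ q2).
  by rewrite n1 d1 d2 d3 d4 n2.
by rewrite /matching_weight big_set1; apply: Hw.
Qed.
End S.

Ltac sub3 := let z := fresh "z" in apply/subsetP=> z; rewrite !inE;
  repeat match goal with |- context [z == ?a] => case: (z == a) end.

Section M.
Variables (R : realFieldType) (V : finType) (e : rel V) (w : V -> V -> R)
  (x : {set V} -> V -> R).
Hypothesis Hsym : symmetric e.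
Hypothesis Hirr : irreflexive e.
Hypothesis Hws : forall a b, w a b = w b a.
Hypothesis Hwp : forall a b, e a b -> 0 < w a b.
Hypothesis Heff : forall S, S != set0 -> \sum_(i in S) x S i = gamma e w S.
Hypothesis Hmon : forall (S T : {set V}) i, S \subset T -> i \in S -> x S i <= x T i.

Definition p i j := x [set i; j] i.

Lemma neq_e a b : e a b -> a != b.
Proof. by move=> ab; apply/eqP => E; rewrite E Hirr in ab. Qed.

Lemma x1 i : x [set i] i = 0.
Proof.
have := Heff (S := [set i]); rewrite big_set1 => ->; last by apply/set0Pn; exists i; rewrite inE.
apply/eqP; rewrite eq_le gamma_ge0 andbT.
apply: (gamma_le3 (b := i) (c := i) (f := i)) => //; first by sub3.
by move=> y z; rewrite !inE => /eqP-> /eqP->; rewrite Hirr.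
Qed.

Lemma p_ge0 i j : 0 <= p i j.
Proof. by rewrite -(x1 i) /p; apply: Hmon; [sub3|rewrite inE]. Qed.

Lemma pC i j : x [set i; j] j = p j i.
Proof. by rewrite /p setUC. Qed.

Lemma gamma2 i j : e i j -> gamma e w [set i; j] = w i j.
Proof.
move=> ij; apply/eqP; rewrite eq_le; apply/andP; split.
  apply: (gamma_le3 (b := i) (c := j) (f := j)); [done|by sub3|exact/ltW/Hwp|].
  move=> y z; rewrite !inE => /orP[]/eqP-> /orP[]/eqP->; rewrite ?Hirr //.
  by rewrite Hws.
have M : is_matching e [set i; j] [set (i, j)].
  apply/andP; split; apply/forallP => q; apply/implyP; rewrite inE => /eqP-> /=.
    by rewrite ij !inE !eqxx ?orbT.
  by apply/forallP => r; apply/implyP; rewrite inE => /eqP->; rewrite eqxx.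
by have := gamma_ge w M; rewrite /matching_weight big_set1.
Qed.

Lemma psum i j : e i j -> p i j + p j i = w i j.
Proof.
move=> ij; rewrite -gamma2 // -(pC i j) -Heff; last by apply/set0Pn; exists i; rewrite !inE eqxx.
by rewrite sum2 //; apply: neq_e.
Qed.

Lemma lemQ b c f : b != c -> c != f -> b != f -> e b c -> e c f ->
  w c f <= w b c -> (e b f -> w b f <= w b c) -> p f c = 0.
Proof.
move=> bc cf bf ebc ecf wcf wbf.
have g : gamma e w [set b; c; f] <= w b c.
  apply: (gamma_le3 (b := b) (c := c) (f := f)); [done|by sub3|exact/ltW/Hwp|].
  move=> y z; rewrite !inE => /orP[/orP[]|] /eqP-> /orP[/orP[]|] /eqP->;
    rewrite ?Hirr // => E; rewrite ?lexx //.
  all: try first [by rewrite Hws lexx | by rewrite Hws | by rewrite Hws; apply: wbf; rewrite Hsym | done].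
have ne : [set b; c; f] != set0 by apply/set0Pn; exists b; rewrite !inE eqxx.
have s := Heff ne; rewrite sum3 // in s.
have s1 : p b c <= x [set b; c; f] b by apply: Hmon; [sub3|rewrite !inE eqxx].
have s2 : p c b <= x [set b; c; f] c.
  by rewrite -pC; apply: Hmon; [sub3|rewrite !inE eqxx ?orbT].
have s3 : p f c <= x [set b; c; f] f by apply: Hmon; [sub3|rewrite !inE eqxx ?orbT].
have ps := psum ebc; have p0 := p_ge0 f c.
rewrite -s in g; lra.
Qed.

Ltac solv := first [done | by rewrite eq_sym | by rewrite Hsym | (try move=> _); lra].
Ltac mon := apply: Hmon; [sub3 | rewrite !inE eqxx ?orbT //].

Definition tri a b c := a != b /\ a != c /\ b != c /\ e a b /\ e b c /\ e a c.

Lemma tri_swap12 a b c : tri a b c -> tri b a c.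
Proof.
case=> [ab [ac [bc [eab [ebc eac]]]]].
by do !split; rewrite // 1?eq_sym // Hsym.
Qed.

Lemma tri_swap23 a b c : tri a b c -> tri a c b.
Proof.
case=> [ab [ac [bc [eab [ebc eac]]]]].
by do !split; rewrite // 1?eq_sym // Hsym.
Qed.

Lemma MAX3 a b c : (w a b <= w b c /\ w a c <= w b c) \/
  (w a c <= w a b /\ w b c <= w a b) \/ (w a b <= w a c /\ w b c <= w a c).
Proof.
case: (leP (w a b) (w b c)) => h1; case: (leP (w a c) (w b c)) => h2;
case: (leP (w a b) (w a c)) => h3;
first [ left; split; lra | right; left; split; lra | right; right; split; lra | exfalso; lra ].
Qed.

Lemma lemT a b c : tri a b c -> w a b <= w b c -> w a c <= w b c ->
  [/\ p a b = 0, p a c = 0, w a b <= p b c, w a c <= p c b & w a b + w a c <= w b c].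
Proof.
move=> [ab [ac [bc [eab [ebc eac]]]]] h1 h2.
have pab : p a b = 0.
  have := Hws a b; have := Hws b c; have := Hws a c => ? ? ?.
  apply: (lemQ (b := c) (c := b) (f := a)); solv.
have pac : p a c = 0.
  have := Hws a b; have := Hws b c; have := Hws a c => ? ? ?.
  apply: (lemQ (b := b) (c := c) (f := a)); solv.
have wbc := Hwp ebc; have wab := Hwp eab; have wac := Hwp eac.
have g : gamma e w [set a; b; c] <= w b c.
  apply: (gamma_le3 (b := a) (c := b) (f := c)); [done|by sub3|exact/ltW|].
  move=> y z; rewrite !inE => /orP[/orP[]|] /eqP-> /orP[/orP[]|] /eqP->;
    rewrite ?Hirr // => E; rewrite ?lexx //.
  all: try first [by rewrite Hws lexx | by rewrite Hws | done].
have ne : [set a; b; c] != set0 by apply/set0Pn; exists a; rewrite !inE eqxx.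
have s := Heff ne; rewrite sum3 // in s.
have s1 : x [set a] a <= x [set a; b; c] a by mon.
have s2 : p b a <= x [set a; b; c] b by rewrite /p; mon.
have s3 : p b c <= x [set a; b; c] b by rewrite /p; mon.
have s4 : p c a <= x [set a; b; c] c by rewrite /p; mon.
have s5 : p c b <= x [set a; b; c] c by rewrite /p; mon.
rewrite x1 in s1.
have q1 := psum eab; have q2 := psum eac; have q3 := psum ebc.
rewrite -s in g; split => //; lra.
Qed.

Lemma lemTWO a b d : a != b -> a != d -> b != d -> e a b -> e a d ->
  0 < p b a -> 0 < p d a -> [/\ e b d, w a b < w b d & w a d < w b d].
Proof.
move=> ab ad bd eab ead pba pda.
have wab := Hws a b; have wad := Hws a d; have wbd := Hws b d.
case: (leP (w a d) (w a b)) => H.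
  case: (boolP (e b d && (w a b < w b d))) => [/andP[E L]|/negP nh].
    by split => //; lra.
  have : p d a = 0.
    apply: (lemQ (b := b) (c := a) (f := d)); try solv.
    move=> E; rewrite leNgt; apply/negP => L; apply: nh; rewrite E /=; lra.
  lra.
case: (boolP (e d b && (w a d < w d b))) => [/andP[E L]|/negP nh].
  by split; rewrite 1?Hsym //; lra.
have : p b a = 0.
  apply: (lemQ (b := d) (c := a) (f := b)); try solv.
  move=> E; rewrite leNgt; apply/negP => L; apply: nh; rewrite E /=; lra.
lra.
Qed.

Lemma lemNB v b c : tri v b c -> 0 < p b v \/ 0 < p c v.
Proof.
move=> T; have := T; case=> [vb [vc [bc [evb [ebc evc]]]]].
have := Hwp evb; have := Hwp ebc; have := Hwp evc.
have := Hws v b; have := Hws b c; have := Hws v c => ? ? ? ? ? ?.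
case: (MAX3 v b c) => [[h1 h2]|[[h1 h2]|[h1 h2]]].
- case: (lemT T h1 h2) => pvb _ _ _ _; have := psum evb; left; lra.
- have T' : tri c v b by apply/tri_swap12/tri_swap23.
  case: (lemT T') => //; try lra; move=> _ _ _ h _; left; lra.
- have T' : tri b v c by apply/tri_swap12.
  case: (lemT T') => //; try lra; move=> _ _ _ h _; right; lra.
Qed.

Ltac wpos := repeat match goal with
  | H : e ?a ?b |- _ => have := Hwp H; have := Hws a b; move: H => /[swap] ? /[swap] ? ?
  end.

Lemma lemSE1 u v a b : tri u v a -> tri u v b -> a != b ->
  w u v <= w u a -> w v a <= w u a -> False.
Proof.
move=> T1 T2 ab h1 h2.
have T1' : tri v u a by apply: tri_swap12.
have [pvu pva h3 h4 _] := lemT T1' (ltac:(by rewrite Hws)) h2.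
have := T1; case=> [uv [ua [va [euv [eva eua]]]]].
have := T2; case=> [_ [ub [vb [_ [evb eub]]]]].
have := Hwp euv; have := Hwp eva; have := Hwp eua; have := Hwp evb; have := Hwp eub.
have := Hws u v; have := Hws v a; have := Hws u a; have := Hws v b; have := Hws u b.
move=> ? ? ? ? ? ? ? ? ? ?.
have := psum euv => ps.
case: (MAX3 u v b) => [[k1 k2]|[[k1 k2]|[k1 k2]]].
- by case: (lemT T2 k1 k2) => ? _ _ _ _; lra.
- have T2' : tri b u v by apply/tri_swap12/tri_swap23.
  by case: (lemT T2'); try lra; move=> _ _ _ ? _; lra.
- have T2' : tri v u b by apply: tri_swap12.
  case: (lemT T2'); try lra; move=> _ _ _ k3 _.
  have [eab l1 l2] := lemTWO ua ub ab eua eub (ltac:(lra)) (ltac:(lra)).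
  have T3 : tri u a b by do !split.
  by case: (lemT T3); try lra; move=> ? _ _ _ _; lra.
Qed.

Lemma lemSE u v a b : tri u v a -> tri u v b -> a != b ->
  w u a < w u v /\ w v a < w u v.
Proof.
move=> T1 T2 ab.
have := T1; case=> [uv [ua [va [euv [eva eua]]]]].
have := Hwp euv; have := Hwp eva; have := Hwp eua.
have := Hws u v; have := Hws v a; have := Hws u a => ? ? ? ? ? ?.
case: (MAX3 u v a) => [[k1 k2]|[[k1 k2]|[k1 k2]]].
- exfalso; apply: (lemSE1 (u := v) (v := u) (a := a) (b := b)) => //; try lra.
  + exact: tri_swap12.
  + exact: tri_swap12.
- have T1' : tri a u v by apply/tri_swap12/tri_swap23.
  by case: (lemT T1'); try lra; move=> _ _ _ _ ?; split; lra.
- by exfalso; apply: (lemSE1 T1 T2 ab).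
Qed.

Lemma lemKEY v b c y : tri v b c -> 0 < p b v -> e v y -> y != b -> y != c ->
  0 < p y v -> False.
Proof.
move=> T pbv evy yb yc pyv.
have := T; case=> [vb [vc [bc [evb [ebc evc]]]]].
have vy := neq_e evy.
have [eby l1 l2] := lemTWO vb vy (ltac:(by rewrite eq_sym)) evb evy pbv pyv.
have T3 : tri v b y by do !split; rewrite // eq_sym.
have [k1 k2] := lemSE T3 T yc.
lra.
Qed.

Lemma lemOUT q b c y : tri q b c -> e q y -> y != b -> y != c -> p y q = 0.
Proof.
move=> T eqy yb yc.
have := p_ge0 y q; rewrite le_eqVlt => /orP[/eqP<-//|pos].
exfalso; case: (lemNB T) => H.
  exact: (lemKEY T H eqy yb yc pos).
exact: (lemKEY (tri_swap23 T) H eqy yc yb pos).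
Qed.

Lemma lemSINGLE v b c d f : tri v b c -> tri v d f -> d != b -> d != c ->
  f != b -> f != c -> False.
Proof.
move=> T1 T2 db dc fb fc.
have := T2; case=> [vd [vf [df [evd [edf evf]]]]].
case: (lemNB T2) => H.
  have := p_ge0 d v; rewrite le_eqVlt => /orP[/eqP E|pos]; first by rewrite -E in H; lra.
  by have := lemOUT T1 evd db dc; lra.
by have := lemOUT T1 evf fb fc; lra.
Qed.

Ltac seteq := let z := fresh "z" in apply/setP=> z; rewrite !inE;
  repeat match goal with |- context [z == ?a] => case: (z == a) end.

Lemma lemOUT3 a b c u v : tri a b c -> u \in [set a; b; c] -> v \notin [set a; b; c] ->
  e u v -> p v u = 0.
Proof.
move=> T; rewrite !inE => /orP[/orP[]|] /eqP -> vT euv; move: vT; rewrite !negb_or.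
- by case/andP=> /andP[_ ?] ?; apply: (lemOUT T).
- by case/andP=> /andP[? _] ?; apply: (lemOUT (tri_swap12 T)).
- by case/andP=> /andP[? ?] _; apply: (lemOUT (tri_swap12 (tri_swap23 T))).
Qed.

Fixpoint layer (T : {set V}) (n : nat) : {set V} :=
  if n is n'.+1 then layer T n' :|: [set v | [exists u in layer T n', e u v]] else T.

Lemma layer_reach (T : {set V}) u v : u \in T -> connect e u v -> exists n, v \in layer T n.
Proof.
move=> uT /connectP [pth P ->].
suff H : forall pth u k, path e u pth -> u \in layer T k ->
  last u pth \in layer T (k + size pth) by exists (0 + size pth)%N; apply: H.
elim=> [|y pth' IH] u' k /=; first by rewrite addn0.
case/andP=> euy P' uk; rewrite -addSnnS; apply: IH => //.
by rewrite /= inE; apply/orP; right; rewrite inE; apply/existsP; exists u'; rewrite uk.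
Qed.

Lemma lemC a b c : tri a b c -> forall n v, v \in layer [set a; b; c] n.+1 ->
  v \notin layer [set a; b; c] n -> exists u, [/\ u \in layer [set a; b; c] n, e u v & 0 < p u v].
Proof.
move=> T; elim=> [|n IH] v.
  rewrite /= inE => /orP[->//|]; rewrite inE => /existsP[u /andP[uT euv]] vT.
  exists u; split => //; have := lemOUT3 T uT vT euv; have := psum euv; have := Hwp euv.
  lra.
rewrite {1}/layer -/layer inE => /orP[->//|]; rewrite inE => /existsP[u /andP[uL euv]] vL.
have uL' : u \notin layer [set a; b; c] n.
  apply/negP => H; move/negP: vL; apply; rewrite /= inE; apply/orP; right.
  by rewrite inE; apply/existsP; exists u; rewrite H.
have [t [tL etu ptu]] := IH u uL uL'.
exists u; split => //.
have := p_ge0 u v; rewrite le_eqVlt => /orP[/eqP E|//]; exfalso.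
have pvu : 0 < p v u by have := psum euv; have := Hwp euv; lra.
have tv : t != v.
  apply/negP => /eqP E2; move/negP: vL; apply; rewrite /= inE -E2 tL //.
have ut : u != t by rewrite eq_sym; exact: neq_e etu.
have eut : e u t by rewrite Hsym.
have [etv _ _] := lemTWO ut (neq_e euv) tv eut euv ptu pvu.
move/negP: vL; apply; rewrite /= inE; apply/orP; right.
by rewrite inE; apply/existsP; exists t; rewrite tL.
Qed.


Lemma lemDISJ a b c d f g : (forall u v, connect e u v) -> tri a b c -> tri d f g ->
  [set a; b; c] :&: [set d; f; g] = set0 -> False.
Proof.
move=> conn T1 T2 dis.
have aT : a \in [set a; b; c] by rewrite !inE eqxx.
have [n0 dn] := layer_reach aT (conn a d).
pose P n := [exists z in [set d; f; g], z \in layer [set a; b; c] n].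
have exP : exists n, P n by exists n0; apply/existsP; exists d; rewrite !inE eqxx dn.
have [N PN minN] := find_ex_minn exP.
have notin : forall z, z \in [set d; f; g] -> z \in [set a; b; c] -> False.
  move=> z z2 z1; have : z \in [set a; b; c] :&: [set d; f; g] by rewrite inE z1 z2.
  by rewrite dis inE.
case/existsP: PN => z /andP[zT2 zL].
case: N minN zL => [|M] minN zL.
  by apply: (notin z zT2 zL).
have zM : z \notin layer [set a; b; c] M.
  apply/negP => H; have : P M by apply/existsP; exists z; rewrite zT2 H.
  by move/minN; rewrite ltnn.
have [u [uL euz puz]] := lemC T1 zL zM.
have uT2 : u \notin [set d; f; g].
  apply/negP => H; have : P M by apply/existsP; exists u; rewrite H uL.
  by move/minN; rewrite ltnn.
have := lemOUT3 T2 zT2 uT2 (ltac:(by rewrite Hsym)); lra.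
Qed.


Lemma lemTRIconv (T : {set V}) : is_triangle e T ->
  exists a b c, tri a b c /\ T = [set a; b; c].
Proof.
case=> c3 He.
have : (2 < #|T|)%N by rewrite c3.
case/card_gt2P => [a [b [c [[aT bT cT] [ab bc ca]]]]].
have sub : [set a; b; c] \subset T.
  by apply/subsetP => z; rewrite !inE => /orP[/orP[]|] /eqP->.
have card : #|[set a; b; c]| = 3%N.
  rewrite setUC cardsU1 cards2 ab !inE negb_or ca eq_sym bc.
  by [].
exists a, b, c; split.
  do !split; try (by []); try (by rewrite eq_sym); apply: He => //.
  by rewrite eq_sym.
by apply/eqP; rewrite eq_sym eqEcard sub card c3 leqnn.
Qed.

Lemma lemROT a b c v : tri a b c -> v \in [set a; b; c] ->
  exists b' c', tri v b' c' /\ [set a; b; c] = [set v; b'; c'].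
Proof.
move=> T; rewrite !inE => /orP[/orP[]|] /eqP->.
- by exists b, c.
- by exists a, c; split; [exact: tri_swap12|seteq].
- by exists a, b; split; [exact: tri_swap12 (tri_swap23 T)|seteq].
Qed.

Lemma SMX a b c : tri a b c -> w a b < w b c -> w a c < w b c ->
  strict_max_edge w [set a; b; c] b c.
Proof.
move=> T h1 h2; have := T; case=> [ab [ac [bc [eab [ebc eac]]]]].
split; rewrite ?inE ?eqxx ?orbT //.
move=> y z; rewrite !inE => /orP[/orP[]|]/eqP-> /orP[/orP[]|]/eqP-> yz H.
all: first [ by rewrite eqxx in yz | by rewrite eqxx in H | by rewrite setUC eqxx in H
           | (have := Hws a b; have := Hws a c; lra) ].
Qed.

Lemma MAXE a b c : tri a b c -> exists u u', e u u' /\ strict_max_edge w [set a; b; c] u u'.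
Proof.
move=> T; have := T; case=> [ab [ac [bc [eab [ebc eac]]]]].
have := Hwp eab; have := Hwp ebc; have := Hwp eac.
have := Hws a b; have := Hws b c; have := Hws a c => ? ? ? ? ? ?.
case: (MAX3 a b c) => [[k1 k2]|[[k1 k2]|[k1 k2]]].
- case: (lemT T k1 k2) => _ _ _ _ k3; exists b, c; split => //.
  by apply: SMX => //; lra.
- have T' : tri c a b by apply: tri_swap12 (tri_swap23 T).
  case: (lemT T'); try lra; move=> _ _ _ _ k3; exists a, b; split => //.
  have -> : [set a; b; c] = [set c; a; b] by seteq.
  by apply: SMX => //; lra.
- have T' : tri b a c by apply: tri_swap12.
  case: (lemT T'); try lra; move=> _ _ _ _ k3; exists a, c; split => //.
  have -> : [set a; b; c] = [set b; a; c] by seteq.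
  by apply: SMX => //; lra.
Qed.

Lemma SHARE v b c f : tri v b c -> tri v b f ->
  exists u u', [/\ e u u', strict_max_edge w [set v; b; c] u u' &
    strict_max_edge w [set v; b; f] u u'].
Proof.
move=> T1 T2; have [<-|cf] := eqVneq c f.
  by have [u [u' [E S]]] := MAXE T1; exists u, u'.
have [k1 k2] := lemSE T1 T2 cf.
have [k3 k4] := lemSE T2 T1 (ltac:(by rewrite eq_sym)).
have := T1; case=> [_ [_ [_ [evb _]]]].
have := Hws v c; have := Hws b c; have := Hws v f; have := Hws b f => ? ? ? ?.
exists v, b; split => //.
  have -> : [set v; b; c] = [set c; v; b] by seteq.
  by apply: SMX; [exact: tri_swap12 (tri_swap23 T1)|lra|lra].
have -> : [set v; b; f] = [set f; v; b] by seteq.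
by apply: SMX; [exact: tri_swap12 (tri_swap23 T2)|lra|lra].
Qed.


Lemma SMtrans (T0 T : {set V}) u v u' v' : strict_max_edge w T0 u v ->
  strict_max_edge w T0 u' v' -> strict_max_edge w T u' v' -> strict_max_edge w T u v.
Proof.
case=> u0 v0 uv H0; case=> u1 v1 uv1 H1 S2.
have Eset : [set u'; v'] = [set u; v].
  apply/eqP; apply/negP => /negP ne.
  have l1 := H0 u' v' u1 v1 uv1 ne.
  have l2 := H1 u v u0 v0 uv (ltac:(by rewrite eq_sym)).
  lra.
have : u \in [set u'; v'] by rewrite Eset !inE eqxx.
have : v \in [set u'; v'] by rewrite Eset !inE eqxx ?orbT.
rewrite !inE => /orP[]/eqP vE /orP[]/eqP uE.
- by rewrite uE vE eqxx in uv.
- case: S2 => u2 v2 uv2 H2; rewrite uE vE; split => //; first by rewrite eq_sym.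
  move=> y z y2 z2 yz ne; rewrite [w v' u']Hws; apply: H2 => //.
  by rewrite [[set u'; v']]setUC.
- by rewrite uE vE.
- by rewrite uE vE eqxx in uv.
Qed.

Lemma main_sec : (forall u v, connect e u v) ->
  (forall T1 T2 : {set V}, is_triangle e T1 -> is_triangle e T2 ->
     T1 :&: T2 != set0 ->
     exists u v, e u v /\ strict_max_edge w T1 u v /\ strict_max_edge w T2 u v)
  /\
  (forall T1 T2 : {set V}, is_triangle e T1 -> is_triangle e T2 ->
     T1 :&: T2 != set0) /\
  ((exists T : {set V}, is_triangle e T) ->
   exists u v, e u v /\
     forall T : {set V}, is_triangle e T -> strict_max_edge w T u v).
Proof.
move=> conn.
have A : forall T1 T2 : {set V}, is_triangle e T1 -> is_triangle e T2 ->
     T1 :&: T2 != set0 ->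
     exists u v, e u v /\ strict_max_edge w T1 u v /\ strict_max_edge w T2 u v.
  move=> T1 T2 /lemTRIconv [a [b [c [Ta ->]]]] /lemTRIconv [d [f [g [Td ->]]]].
  case/set0Pn => v /setIP [v1 v2].
  have [b1 [c1 [T1' ->]]] := lemROT Ta v1.
  have [d1 [f1 [T2' ->]]] := lemROT Td v2.
  have E1 : [set v; b1; c1] = [set v; c1; b1] by seteq.
  have E2 : [set v; d1; f1] = [set v; f1; d1] by seteq.
  have [db|db] := eqVneq d1 b1.
    rewrite db in T2' *; have [u [u' [? ? ?]]] := SHARE T1' T2'; by exists u, u'.
  have [dc|dc] := eqVneq d1 c1.
    rewrite E1; rewrite dc in T2' *; have [u [u' [? ? ?]]] := SHARE (tri_swap23 T1') T2'; by exists u, u'.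
  have [fb|fb] := eqVneq f1 b1.
    rewrite E2; rewrite fb in T2' *; have [u [u' [? ? ?]]] := SHARE T1' (tri_swap23 T2'); by exists u, u'.
  have [fc|fc] := eqVneq f1 c1.
    rewrite E1 E2; rewrite fc in T2' *.
    have [u [u' [? ? ?]]] := SHARE (tri_swap23 T1') (tri_swap23 T2'); by exists u, u'.
  by exfalso; apply: (lemSINGLE T1' T2' db dc fb fc).
have B : forall T1 T2 : {set V}, is_triangle e T1 -> is_triangle e T2 ->
     T1 :&: T2 != set0.
  move=> T1 T2 /lemTRIconv [a [b [c [Ta ->]]]] /lemTRIconv [d [f [g [Td ->]]]].
  by apply/negP => /eqP dis; apply: (lemDISJ conn Ta Td dis).
split => //; split => //.
case=> T0 HT0.
have [u [v [euv [S0 _]]]] := A T0 T0 HT0 HT0 (B _ _ HT0 HT0).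
exists u, v; split => // T HT.
have [u' [v' [_ [S1 S2]]]] := A T0 T HT0 HT (B _ _ HT0 HT).
exact: SMtrans S0 S1 S2.
Qed.

End M.


Theorem mainTheorem13 (R : realFieldType) (V : finType) (e : rel V)
  (w : V -> V -> R) :
  simple_graph e -> edge_weights e w -> connected_graph e ->
  population_monotonic e w ->
  (* (a) *)
  (forall T1 T2 : {set V}, is_triangle e T1 -> is_triangle e T2 ->
     T1 :&: T2 != set0 ->
     exists u v, e u v /\ strict_max_edge w T1 u v /\ strict_max_edge w T2 u v)
  /\
  (* (b) *)
  (forall T1 T2 : {set V}, is_triangle e T1 -> is_triangle e T2 ->
     T1 :&: T2 != set0) /\
  ((exists T : {set V}, is_triangle e T) ->
   exists u v, e u v /\
     forall T : {set V}, is_triangle e T -> strict_max_edge w T u v).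
Proof.
move=> [Hsym Hirr] [Hws Hwp] conn [x [Heff Hmon]].
exact: (main_sec Hsym Hirr Hws Hwp Heff Hmon conn).
Qed.
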